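(* Let $n$ be a positive integer and $r$ an integer with $0\le r\le \lceil n/2\rceil$, and let $d_\star=d_\star(r,n)$ be an integer maximising $q_n^{r,d}$ over all integers $d$. Then either \[ d_\star = \left\lceil \frac{(n-2r)^2+2n-5r-1}{n-r+3}\right\rceil \quad\text{or}\quad d_\star = \frac{(n-2r)^2+2n-5r-1}{n-r+3}+1. \]
   Context: $Q(P_n)$ is the family of subsets of $[n]$ containing no two consecutive integers, and $Q^{(r)}(P_n)$ its members of size $r$. The out-degree $d^+(A)$ of $A\in Q(P_n)$ is the number of $b\in[n]\setminus A$ with $A\cup\{b\}\in Q(P_n)$. $q_n^{r,d}$ is the number of $A\in Q^{(r)}(P_n)$ with $d^+(A)=d$. *)

(* Defs.v *)
From mathcomp Require Import all_boot all_order all_algebra.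
Set Implicit Arguments. Unset Strict Implicit. Unset Printing Implicit Defensive.
Import Order.TTheory GRing.Theory Num.Theory.

(* [n] = {1,...,n} is represented by the elements of 'I_n.+1 other than 0. *)
Definition ground (n : nat) : {set 'I_n.+1} := [set i : 'I_n.+1 | 0 < (i : nat)].

Definition inQ (n : nat) (A : {set 'I_n.+1}) : bool :=
  (A \subset ground n) &&
  [forall i in A, forall j in A, (i : nat).+1 != (j : nat)].

Definition outdeg (n : nat) (A : {set 'I_n.+1}) : nat :=
  #|[set b in ground n :\: A | inQ (b |: A)]|.

Definition qnrd (n r : nat) (d : int) : nat :=
  #|[set A : {set 'I_n.+1} | [&& inQ A, #|A| == r & Posz (outdeg A) == d]]|.

(* Main.v *)
Require Import Defs.
From mathcomp Require Import all_boot all_order all_algebra.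
From mathcomp Require Import zify ring lra.
Set Implicit Arguments. Unset Strict Implicit. Unset Printing Implicit Defensive.

Fixpoint allbits n : seq (seq bool) :=
  if n is m.+1 then [seq false :: s | s <- allbits m] ++ [seq true :: s | s <- allbits m]
  else [:: [::]].

Lemma mem_allbits n s : (s \in allbits n) = (size s == n).
Proof.
elim: n s => [|n IH] s; case: s => [|b s] //=.
  by rewrite mem_cat; apply/negbTE; apply/norP; split; apply/mapP => [[t _]].
rewrite mem_cat eqSS; case: b.
  rewrite orbC; apply/idP/idP.
    by case/orP=> /mapP [t Ht] [*]; subst; rewrite -IH.
  by move=> H; apply/orP; left; apply/mapP; exists s => //; rewrite IH.
apply/idP/idP.
  by case/orP=> /mapP [t Ht] [*]; subst; rewrite -IH.
by move=> H; apply/orP; left; apply/mapP; exists s => //; rewrite IH.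
Qed.


Lemma uniq_allbits n : uniq (allbits n).
Proof.
elim: n => //= n IH; rewrite cat_uniq !map_inj_uniq //; last by move=> x y [].
  rewrite IH /= andbT; apply/hasPn => s /mapP [t _ ->]; apply/mapP => [[u _ ]] //.
by move=> x y [].
Qed.

Definition nr (a b : bool) := ~~ (a && b).

Fixpoint V (a b : bool) (s : seq bool) : nat :=
  if s is x :: t then ~~ [|| a, b | x] + V b x t else ~~ (a || b).

Definition cnt a b n r d :=
  count (fun s => [&& path nr b s, count id s == r & V a b s == d]) (allbits n).

Lemma cnt_S a b n r d : cnt a b n.+1 r d =
  count (fun s => [&& path nr false s, count id s == r & ~~(a || b) + V b false s == d]) (allbits n)
  + count (fun s => [&& ~~ b, path nr true s, (count id s).+1 == r & V b true s == d]) (allbits n).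
Proof.
rewrite /cnt /= count_cat !count_map; congr (_ + _); apply: eq_count => s /=.
  by rewrite /nr andbF /= orbF.
by rewrite /nr !orbT /= add1n add0n andbT -!andbA.
Qed.

Lemma count0 T (p : pred T) s : (forall x, p x = false) -> count p s = 0.
Proof. by move=> H; elim: s => //= x s ->; rewrite H. Qed.

Lemma cnt10S n r d : cnt true false n.+1 r d = cnt false false n r d + (if r is r'.+1 then cnt false true n r' d else 0).
Proof.
rewrite cnt_S /=; congr (_ + _).
by case: r => [|r] //; rewrite count0 // => s; rewrite andbF.
Qed.

Lemma cnt00S n r d : cnt false false n.+1 r d =
  (if d is d'.+1 then cnt false false n r d' else 0) + (if r is r'.+1 then cnt false true n r' d else 0).
Proof.
rewrite cnt_S /=; congr (_ + _).
  case: d => [|d]; first by rewrite count0 // => s; rewrite add1n /= !andbF.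
  rewrite /cnt; apply: eq_count; move=> s; by rewrite add1n eqSS.
case: r => [|r]; last by []. by rewrite count0 // => s /=; rewrite andbF.
Qed.

Lemma cnt01S n r d : cnt false true n.+1 r d = cnt true false n r d.
Proof. by rewrite cnt_S /= count_pred0 addn0 /cnt; apply: eq_count; move=> s. Qed.

Lemma cnt0 a b r d : cnt a b 0 r d = ((r == 0) && ((~~ (a || b) : nat) == d)).
Proof. by rewrite /cnt /= addn0 eq_sym. Qed.

Definition f10 n r d := if (2 * r <= n.+1)%N then 'C(r.+1, n.+1 - 2 * r - d) * 'C(n - 2 * r, d) else 0.
Definition f00 n r d := if (2 * r <= n.+1)%N then 'C(r, n.+1 - 2 * r - d) * 'C(n.+1 - 2 * r, d) else 0.
Definition f01 n r d := if (2 * r <= n)%N then 'C(r.+1, n - 2 * r - d) * 'C((n - 2 * r).-1, d) else 0.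

Lemma cnt_closed n : forall r d, [/\ cnt true false n r d = f10 n r d,
   cnt false false n r d = f00 n r d & cnt false true n r d = f01 n r d].
Proof.
elim: n => [|n IH] r d.
  rewrite !cnt0 /f10 /f00 /f01 /=.
  case: r => [|r]; last by rewrite !ifF //; lia.
  rewrite /= !sub0n !subn0 bin0 mul1n.
  by case: d => [|[|d]] //=; rewrite ?bin0 ?bin1 ?mul1n ?bin0n.
split.
- rewrite cnt10S; have [_ -> _] := IH r d.
  case: r => [|r].
    rewrite /f00 /f10 !muln0 !subn0 addn0 /=.
    case: (leqP d n.+1) => Hd.
      by rewrite (subSn Hd) binS bin0n.
    by rewrite !(bin_small Hd) !muln0.
  have [_ _ ->] := IH r d; rewrite /f00 /f10 /f01.
  case: (leqP (2 * r.+1) n.+2) => H2.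
    rewrite (_ : 2 * r <= n = true); last by lia.
    case: (leqP (2 * r.+1) n.+1) => H1.
      have -> : n.+2 - 2 * r.+1 = (n.+1 - 2 * r.+1).+1 by lia.
      have -> : (n - 2 * r).-1 = n.+1 - 2 * r.+1 by lia.
      have -> : n - 2 * r = (n.+1 - 2 * r.+1).+1 by lia.
      set M := n.+1 - 2 * r.+1.
      case: (leqP d M) => Hd.
        by rewrite !subSn // [in RHS]binS mulnDl addnC.
      by rewrite !(bin_small Hd) !muln0.
    have -> : n.+2 - 2 * r.+1 = 0 by lia.
    have -> : n.+1 - 2 * r.+1 = 0 by lia.
    have -> : n - 2 * r = 0 by lia.
    by rewrite !sub0n /= !bin0 add0n.
  rewrite ifF; last by lia.
  rewrite ifF //; lia.
- rewrite cnt00S /f00.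
  case: d => [|d]; case: r => [|r].
  + by rewrite /= subn0 bin0n.
  + have [_ _ ->] := IH r 0; rewrite /f01 /= add0n subn0 bin0 muln1.
    have -> : n.+2 - 2 * r.+1 = n - 2 * r by lia.
    rewrite (_ : (2 * r.+1 <= n.+2) = (2 * r <= n)); first by rewrite subn0 bin0 muln1.
    by apply/idP/idP => ?; lia.
  + have [_ -> _] := IH 0 d; rewrite /f00 /= addn0 !muln0 !subn0.
    case: (leqP d n.+1) => Hd.
      rewrite subSS; case E: (n.+1 - d) => [|k].
        have -> : d = n.+1 by lia.
        by rewrite !binn.
      by rewrite !bin0n.
    by rewrite (bin_small Hd) (@bin_small n.+2 d.+1) ?muln0.
  + have [_ -> _] := IH r.+1 d; have [_ _ ->] := IH r d.+1; rewrite /f00 /f01.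
    case: (leqP (2 * r) n) => Hr; last first.
      by rewrite !ifF //; lia.
    rewrite (_ : (2 * r.+1 <= n.+2) = true); last by lia.
    have -> : n.+2 - 2 * r.+1 - d.+1 = (n - 2 * r).-1 - d by lia.
    have -> : n.+2 - 2 * r.+1 = n - 2 * r by lia.
    have -> : n.+1 - 2 * r.+1 - d = (n - 2 * r).-1 - d by lia.
    have -> : n.+1 - 2 * r.+1 = (n - 2 * r).-1 by lia.
    have -> : n - 2 * r - d.+1 = (n - 2 * r).-1 - d by lia.
    case E: (n - 2 * r) => [|K].
      by rewrite ifF /= ?bin0n ?muln0 //; lia.
    rewrite ifT /=; last by lia.
    by rewrite binS mulnDr addnC.
- rewrite cnt01S; have [-> _ _] := IH r d; rewrite /f10 /f01.
  have -> : (n.+1 - 2 * r).-1 = n - 2 * r by lia.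
  by [].
Qed.


Lemma card_ord_count m (S : {set 'I_m}) (p : pred nat) :
  (forall i : 'I_m, (i \in S) = p i) -> #|S| = count p (iota 0 m).
Proof.
move=> H. rewrite -val_enum_ord count_map cardE /enum_mem size_filter.
by rewrite count_filter; apply: eq_count => i /=; rewrite H inE andbT.
Qed.

Definition fromb n (s : seq bool) : {set 'I_n.+1} := [set i : 'I_n.+1 | nth false (false :: s) i].
Definition bitsof n (A : {set 'I_n.+1}) : seq bool := mkseq (fun k => inord k.+1 \in A) n.

Lemma mem_fromb n s (i : 'I_n.+1) : (i \in fromb n s) = nth false (false :: s) i.
Proof. by rewrite inE. Qed.

Lemma size_bitsof n (A : {set 'I_n.+1}) : size (bitsof A) = n.
Proof. by rewrite size_mkseq. Qed.

Lemma frombK n (A : {set 'I_n.+1}) : A \subset ground n -> fromb n (bitsof A) = A.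
Proof.
move=> HA; apply/setP => i; rewrite mem_fromb.
case: i => [[|k] Hk] /=.
  apply/esym/negbTE/negP => /(subsetP HA); by rewrite inE.
rewrite nth_mkseq; last by [].
by congr (_ \in A); apply: val_inj; rewrite /= inordK.
Qed.

Lemma fromb_inj n s t : size s = n -> size t = n -> fromb n s = fromb n t -> s = t.
Proof.
move=> Hs Ht E; apply: (@eq_from_nth _ false); first by rewrite Hs Ht.
move=> i Hi.
have : ((inord i.+1 : 'I_n.+1) \in fromb n s) = ((inord i.+1 : 'I_n.+1) \in fromb n t) by rewrite E.
by rewrite /= !mem_fromb inordK //= ltnS -Hs.
Qed.

Lemma card_transfer n (Q : {set 'I_n.+1} -> bool) (P : pred (seq bool)) :
  (forall A, Q A -> A \subset ground n) ->
  (forall s, size s = n -> Q (fromb n s) = P s) ->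
  #|[set A | Q A]| = count P (allbits n).
Proof.
move=> HG HP.
have U : uniq (map (fromb n) (filter P (allbits n))).
  rewrite map_inj_in_uniq ?filter_uniq ?uniq_allbits //.
  move=> s t; rewrite !mem_filter !mem_allbits => /andP [_ /eqP Hs] /andP [_ /eqP Ht].
  exact: fromb_inj.
rewrite -size_filter -(size_map (fromb n)) -(card_uniqP U).
apply: eq_card => A; rewrite inE; apply/idP/idP.
  move=> QA; apply/mapP; exists (bitsof A); last by rewrite frombK //; apply: HG.
  rewrite mem_filter mem_allbits size_bitsof eqxx andbT -HP ?size_bitsof //.
  by rewrite frombK //; apply: HG.
case/mapP => s; rewrite mem_filter mem_allbits => /andP [Ps /eqP Hs] ->.
by rewrite HP.
Qed.

Lemma fromb_ground n s : fromb n s \subset ground n.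
Proof.
apply/subsetP => i; rewrite mem_fromb inE; by case: i => [[|k] Hk].
Qed.

Definition Fprop n (B : {set 'I_n.+1}) :=
  [forall i in B, forall j in B, (i : nat).+1 != j].

Lemma Fprop_fromb n s : size s = n -> Fprop (fromb n s) = path nr false s.
Proof.
move=> Hs; apply/idP/idP.
  move=> H; apply/(pathP false) => k Hk.
  case: k Hk => [|k] Hk //=.
  apply/negP => /andP [H1 H2].
  have Hk1 : k.+1 < n.+1 by lia.
  have Hk2 : k.+2 < n.+1 by lia.
  have M1 : (inord k.+1 : 'I_n.+1) \in fromb n s by rewrite mem_fromb inordK.
  have M2 : (inord k.+2 : 'I_n.+1) \in fromb n s by rewrite mem_fromb inordK.
  move/forallP: H => /(_ (inord k.+1)) /implyP /(_ M1) /forallP /(_ (inord k.+2)) /implyP /(_ M2).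
  by rewrite !inordK // eqxx.
move=> Hp; apply/forallP => i; apply/implyP => iA; apply/forallP => j; apply/implyP => jA.
apply/eqP => Eij.
rewrite mem_fromb in iA; rewrite mem_fromb -Eij /= in jA.
have Hi : i < size s by case: (ltnP i (size s)) => // Hi; rewrite nth_default in jA.
move/(pathP false): Hp => /(_ i Hi).
by rewrite /nr jA andbT iA.
Qed.

Lemma inQ_fromb n s : size s = n -> inQ (fromb n s) = path nr false s.
Proof. by move=> Hs; rewrite /inQ fromb_ground /= -(Fprop_fromb Hs). Qed.

Lemma card_fromb n s : size s = n -> #|fromb n s| = count id s.
Proof.
move=> Hs; rewrite (@card_ord_count _ _ (nth false (false :: s))); last by move=> i; rewrite mem_fromb.
transitivity (count id (false :: s)); last by [].
by rewrite -{2}(mkseq_nth false (false :: s)) /mkseq count_map /= Hs.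
Qed.

Lemma iota1 m : iota 1 m = map succn (iota 0 m).
Proof. by rewrite (iotaDl 1 0). Qed.

Lemma V_count a b s : V a b s = count (fun i => ~~ [|| nth false (a::b::s) i,
  nth false (a::b::s) i.+1 | nth false (a::b::s) i.+2]) (iota 0 (size s).+1).
Proof.
elim: s a b => [|x t IH] a b; first by rewrite /= orbF addn0.
rewrite [in RHS](_ : iota 0 (size (x :: t)).+1 = 0 :: map succn (iota 0 (size t).+1)); last first.
  by rewrite -iota1.
by rewrite [V a b _]/= IH [count _ (0 :: _)]/= count_map.
Qed.

Lemma outdeg_fromb n s : size s = n -> path nr false s -> outdeg (fromb n s) = V true false s.
Proof.
move=> Hs Hp. set A := fromb n s. set u := false :: s.
have FA : Fprop A by rewrite /A Fprop_fromb.
rewrite /outdeg (@card_ord_count _ _ (fun b => [&& 0 < b, ~~ nth false u b, ~~ nth false u b.-1 & ~~ nth false u b.+1])).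
  rewrite V_count Hs; apply: eq_in_count => b _.
  case: b => [|b] //=.
  by rewrite /u; case: (nth false (false :: s) b); case: (nth false s b); case: (nth false s b.+1).
move=> b; rewrite !inE -/u.
case: (ltnP 0 b) => Hb; last by rewrite andbF.
case Eb: (nth false u b) => //=.
have Mem : forall i : 'I_n.+1, (i \in A) = nth false u i by move=> i; rewrite mem_fromb.
have Hbn := ltn_ord b.
rewrite /inQ subUset sub1set inE Hb fromb_ground /=.
apply/idP/idP.
- move=> F; apply/andP; split; apply/negP => H.
  + have Hb1 : b.-1 < n.+1 by lia.
    have M1 : (inord b.-1 : 'I_n.+1) \in b |: A by rewrite in_setU1 Mem inordK // H orbT.
    have M2 : b \in b |: A by rewrite setU11.
    move/forallP: F => /(_ (inord b.-1)) /implyP /(_ M1) /forallP /(_ b) /implyP /(_ M2).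
    by rewrite inordK // prednK // eqxx.
  + have Hb1 : b.+1 < n.+1.
      case: (ltnP b (size s)) => Hbs; first by lia.
      by rewrite nth_default in H.
    have M2 : (inord b.+1 : 'I_n.+1) \in b |: A by rewrite in_setU1 Mem inordK //= H orbT.
    have M1 : b \in b |: A by rewrite setU11.
    move/forallP: F => /(_ b) /implyP /(_ M1) /forallP /(_ (inord b.+1)) /implyP /(_ M2).
    by rewrite inordK // eqxx.
- move=> /andP [N1 N2].
  apply/forallP => i; apply/implyP; rewrite in_setU1 => /orP [/eqP -> | iA];
    apply/forallP => j; apply/implyP; rewrite in_setU1 => /orP [/eqP -> | jA]; apply/eqP => E.
  + lia.
  + by rewrite Mem -E /= in jA; rewrite jA in N2.
  + rewrite Mem in iA; move: iA; have -> : (i : nat) = b.-1 by lia.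
    by rewrite (negbTE N1).
  + move/forallP: FA => /(_ i) /implyP /(_ iA) /forallP /(_ j) /implyP /(_ jA).
    by rewrite E eqxx.
Qed.

Lemma qnrd_cnt n r d : qnrd n r (Posz d) = cnt true false n r d.
Proof.
rewrite /qnrd /cnt; apply: card_transfer.
  by move=> A /and3P [/andP [HG _] _ _].
move=> s Hs; rewrite inQ_fromb // card_fromb // eqz_nat.
case Hp: (path nr false s) => //=.
by rewrite outdeg_fromb.
Qed.

Lemma qnrd_neg n r k : qnrd n r (Negz k) = 0.
Proof.
rewrite /qnrd; apply/eqP; rewrite cards_eq0; apply/eqP/setP => A.
by rewrite !inE /= !andbF.
Qed.

Unset Implicit Arguments.
Import Order.TTheory GRing.Theory Num.Theory.
Local Open Scope ring_scope.

Theorem mainTheorem5 (n r : nat) (dstar : int) :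
  (0 < n)%N -> (r <= uphalf n)%N ->
  (forall d : int, (qnrd n r d <= qnrd n r dstar)%N) ->
  let X : int := (n%:Z - 2 * r%:Z) ^+ 2 + 2 * n%:Z - 5 * r%:Z - 1 in
  let Y : int := n%:Z - r%:Z + 3 in
  dstar = Num.ceil ((X%:~R : rat) / Y%:~R)
  \/ (dstar%:~R : rat) = X%:~R / Y%:~R + 1.
Proof.
move=> Hn Hr Hmax X Y.
have Hr2 : (2 * r <= n.+1)%N.
  move: Hr; rewrite uphalf_half; have := odd_double_half n; rewrite -muln2. lia.
have Eq : forall d : nat, qnrd n r d = f10 n r d.
  by move=> d; rewrite qnrd_cnt; have [-> _ _] := cnt_closed n r d.
have Hpos : (0 < f10 n r (n - 2 * r))%N.
  rewrite /f10 Hr2 muln_gt0 !bin_gt0; apply/andP; split; lia.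
have [dd Hdd] : exists dd : nat, dstar = dd.
  case: dstar Hmax => [k|k] H; first by exists k.
  exfalso; have := H (Posz (n - 2 * r)); rewrite qnrd_neg Eq; lia.
subst dstar.
have Hg : forall e : nat, (f10 n r e <= f10 n r dd)%N.
  by move=> e; rewrite -!Eq; apply: Hmax.
have Gdd : (0 < f10 n r dd)%N by apply: leq_trans Hpos (Hg _).
have HY0 : 0 < Y by rewrite /Y; lia.
case: (ltnP n (2 * r)) => Hcase.
  have E2 : (2 * r = n.+1)%N by lia.
  move: Gdd; rewrite /f10 Hr2.
  have -> : (n - 2 * r = 0)%N by lia.
  rewrite muln_gt0 => /andP [_]; rewrite bin_gt0 leqn0 => /eqP ->.
  right.
  have EX : X = - Y.
    rewrite /X /Y expr2.
    have -> : n%:Z = 2 * r%:Z - 1 by lia.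
    ring.
  rewrite EX intrN mulNr divff ?addNr //.
  by rewrite intr_eq0; apply/eqP => H; rewrite H in HY0.
have [N HN] : exists N, n = (N + 2 * r)%N by exists (n - 2 * r)%N; lia.
subst n.
pose g e := ('C(r.+1, N.+1 - e) * 'C(N, e))%N.
have Eg : forall e, f10 (N + 2 * r) r e = g e.
  move=> e; rewrite /f10 ifT; last by lia.
  by rewrite /g; congr (_ * _)%N; congr binomial; lia.
have Id : forall e, (e <= N)%N ->
   (g e.+1 * (e.+1 * (r.+1 - (N - e))) = g e * ((N - e).+1 * (N - e)))%N.
  move=> e He; rewrite /g.
  have -> : (N.+1 - e.+1 = N - e)%N by lia.
  have -> : (N.+1 - e = (N - e).+1)%N by lia.
  have h1 := mul_bin_left r.+1 (N - e); have h2 := mul_bin_left N e.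
  move: h1 h2; set a := (N - e)%N.
  set c1 := 'C(r.+1, a); set c2 := 'C(r.+1, a.+1); set c3 := 'C(N, e.+1); set c4 := 'C(N, e).
  nia.
have EX : X = N%:Z * N%:Z + 2 * N%:Z - r%:Z - 1.
  rewrite /X expr2 PoszD PoszM; ring.
have EY : Y = N%:Z + r%:Z + 3.
  rewrite /Y PoszD PoszM; ring.
rewrite Eg in Gdd; move: Gdd; rewrite /g muln_gt0 !bin_gt0 => /andP [Hdd2 Hdd1].
have Hg' : forall e, (g e <= g dd)%N by move=> e; rewrite -!Eg.
have Hg0 : (0 < g dd)%N by rewrite /g muln_gt0 !bin_gt0 Hdd1 Hdd2.
have S1 : X <= dd%:Z * Y.
  rewrite leNgt; apply/negP => Hlt.
  have := Id dd Hdd1; have := Hg' dd.+1.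
  move: Hg0; set G1 := g dd.+1; set G0 := g dd => Hg0 HG HI.
  have Hb : (dd.+1 * (r.+1 - (N - dd)) < (N - dd).+1 * (N - dd))%N.
    rewrite EX EY in Hlt.
    have [a Ha] : exists a, N = (a + dd)%N by exists (N - dd)%N; lia.
    have [b Hb] : exists b, r = (a + b)%N by exists (r - a)%N; lia.
    rewrite Ha Hb in Hlt *; rewrite addnK.
    have -> : ((a + b).+1 - a = b.+1)%N by lia.
    move: Hlt; clear; nia.
  move: Hb HI HG Hg0; set B2 := (dd.+1 * _)%N; set B1 := ((N - dd).+1 * _)%N.
  move=> Hb HI HG Hg0.
  have : (G1 * B2 <= G0 * B2)%N by apply: leq_mul.
  have : (G0 * B2 < G0 * B1)%N by rewrite ltn_pmul2l.
  move: HI; clear; lia.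
have S2 : (0 < dd)%N -> (dd%:Z - 1) * Y <= X.
  move=> Hd0; rewrite leNgt; apply/negP => Hlt.
  have [e Hde] : exists e, dd = e.+1 by exists dd.-1; lia.
  rewrite Hde in Hlt Hg0 Hdd1 Hdd2 Hg'.
  have He : (e <= N)%N by lia.
  have := Id _ He; have := Hg' e.
  move: Hg0; set G1 := g e; set G0 := g e.+1 => Hg0 HG HI.
  have Hb : ((N - e).+1 * (N - e) < e.+1 * (r.+1 - (N - e)))%N.
    rewrite EX EY in Hlt.
    have [a Ha] : exists a, N = (a + e)%N by exists (N - e)%N; lia.
    have [b Hb] : exists b, r.+1 = (a + b)%N by exists (r.+1 - a)%N; lia.
    have Hr' : r%:Z = (a + b)%N%:Z - 1 by lia.
    rewrite Ha Hr' in Hlt; rewrite Ha Hb addnK.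
    have -> : ((a + b) - a = b)%N by lia.
    move: Hlt; clear; nia.
  move: Hb HI HG Hg0; set B2 := (e.+1 * _)%N; set B1 := ((N - e).+1 * _)%N.
  move=> Hb HI HG Hg0.
  have : (G1 * B1 <= G0 * B1)%N by apply: leq_mul.
  have : (G0 * B1 < G0 * B2)%N by rewrite ltn_pmul2l.
  move: HI; clear; lia.
have HYr : (Y%:~R : rat) != 0 by rewrite intr_eq0; apply/eqP => H; rewrite H in HY0.
case: (boolP (X == (dd%:Z - 1) * Y)) => HE.
  right; rewrite (eqP HE) intrM mulfK // rmorphB /=.
  by rewrite subrK.
left; apply/esym/ceil_def.
rewrite ltr_pdivlMr ?ltr0z // ler_pdivrMr ?ltr0z // -!intrM ltr_int ler_int S1 andbT.
case: (posnP dd) => Hd0.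
  rewrite Hd0 EX EY; lia.
rewrite lt_neqAle S2 // andbT eq_sym //.
Qed.
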